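(* For every positive integer $P$, the linear program (NS-LP) defined in the context is a relaxation of problem (NS) with parameter $P$: for every feasible solution $(\boldsymbol{x},\boldsymbol{y},\boldsymbol{r},\boldsymbol{z},\boldsymbol{\theta})$ of (NS) there exists a feasible solution of (NS-LP) with the same $\boldsymbol{x},\boldsymbol{y}$ and objective value no larger; in particular the optimal value of (NS-LP) is at most the optimal value of (NS).
   Context: Network: a directed graph $\mathcal{G}=(\mathcal{I},\mathcal{L})$; link $(i,j)$ has delay $d_{ij}\ge0$ and capacity $C_{ij}$; cloud nodes $\mathcal{V}\subseteq\mathcal{I}$ with capacities $\mu_v$. Services $k\in\mathcal{K}$ have source $S(k)\notin\mathcal{V}$, destination $D(k)\notin\mathcal{V}$, function index set $\mathcal{F}(k)=\{1,\dots,\ell_k\}$, rates $\lambda_s(k)$ for $s\in\mathcal{F}(k)\cup\{0\}$, NFV delays $d_{v,s}(k)$, and E2E thresholds $\Theta_k$; $\sigma>0$ is a constant, $\mathcal{P}=\{1,\dots,P\}$. Convention: for every node $i\in\mathcal{I}$, $x_{i,0}(k)=1$ iff $i=S(k)$ (else $0$), $x_{i,\ell_k+1}(k)=1$ iff $i=D(k)$ (else $0$), and $x_{i,s}(k)=0$ for $i\notin\mathcal{V}$, $s\in\mathcal{F}(k)$. Write $\theta_N(k)=\sum_{v\in\mathcal{V}}\sum_{s\in\mathcal{F}(k)}d_{v,s}(k)x_{v,s}(k)$ and $\theta_L(k)=\sum_{s\in\mathcal{F}(k)\cup\{0\}}\theta(k,s)$; objective $\Phi=\sum_{v}y_v+\sigma\sum_k(\theta_L(k)+\theta_N(k))$.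 Problem (NS): minimize $\Phi$ over $x_{v,s}(k),y_v\in\{0,1\}$, $r(k,s,p),r_{ij}(k,s,p)\ge0$, $z_{ij}(k,s,p)\in\{0,1\}$, $\theta(k,s)\ge0$ subject to: $\sum_{v}x_{v,s}(k)=1$; $x_{v,s}(k)\le y_v$; $\sum_k\sum_{s\in\mathcal{F}(k)}\lambda_s(k)x_{v,s}(k)\le\mu_vy_v$; $\sum_{p}r(k,s,p)=1$; $r_{ij}(k,s,p)=r(k,s,p)z_{ij}(k,s,p)$; $\sum_k\sum_{s\in\mathcal{F}(k)\cup\{0\}}\sum_p\lambda_s(k)r_{ij}(k,s,p)\le C_{ij}$; $\sum_{j:(j,i)\in\mathcal{L}}z_{ji}(k,s,p)-\sum_{j:(i,j)\in\mathcal{L}}z_{ij}(k,s,p)=x_{i,s+1}(k)-x_{i,s}(k)$ for all $i\in\mathcal{I}$; $\theta(k,s)\ge\sum_{(i,j)}d_{ij}z_{ij}(k,s,p)$; $\theta_N(k)+\theta_L(k)\le\Theta_k$ (all for all relevant indices $v\in\mathcal{V},k\in\mathcal{K},s,p\in\mathcal{P},(i,j)\in\mathcal{L}$). Problem (NS-LP): minimize $\Phi$ over continuous variables $x_{v,s}(k),y_v\in[0,1]$, $z_{ij}(k,s)\in[0,1]$, $\theta(k,s)\ge0$ (single path index) subject to: $\sum_v x_{v,s}(k)=1$; $x_{v,s}(k)\le y_v$; $\sum_k\sum_{s\in\mathcal{F}(k)}\lambda_s(k)x_{v,s}(k)\le\mu_vy_v$; $\sum_k\sum_{s\in\mathcal{F}(k)\cup\{0\}}\lambda_s(k)z_{ij}(k,s)\le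 C_{ij}$; $\sum_{j:(j,i)\in\mathcal{L}}z_{ji}(k,s)-\sum_{j:(i,j)\in\mathcal{L}}z_{ij}(k,s)=x_{i,s+1}(k)-x_{i,s}(k)$ for all $i\in\mathcal{I}$; $\theta(k,s)\ge\sum_{(i,j)}d_{ij}z_{ij}(k,s)$; $\theta_N(k)+\theta_L(k)\le\Theta_k$. *)

(* Defs.v *)
From HB Require Import structures.
From mathcomp Require Import all_boot all_order all_algebra.
Set Implicit Arguments. Unset Strict Implicit. Unset Printing Implicit Defensive.
Import Order.TTheory GRing.Theory Num.Theory.
Local Open Scope ring_scope.

(* Nodes form the finite type I, services the finite type K.  Functions of service k
   are indexed by nat s in F(k) = {1,...,len k}; path segments by
   s in F(k) ∪ {0} = {0,...,len k}. *)
Record network (R : realFieldType) (I K : finType) := Network {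
  link  : rel I;
  delay : I -> I -> R;
  cap   : I -> I -> R;
  cloud : {set I};
  mu    : I -> R;
  src   : K -> I;
  dst   : K -> I;
  len   : K -> nat;
  lam   : K -> nat -> R;         (* lam k s = lambda_s(k) *)
  nfv   : I -> K -> nat -> R;    (* nfv v k s = d_{v,s}(k) *)
  Theta : K -> R;
  sigma : R }.

Arguments link {R I K}. Arguments delay {R I K}. Arguments cap {R I K}.
Arguments cloud {R I K}. Arguments mu {R I K}. Arguments src {R I K}.
Arguments dst {R I K}. Arguments len {R I K}. Arguments lam {R I K}.
Arguments nfv {R I K}. Arguments Theta {R I K}. Arguments sigma {R I K}.

Definition wf_network (R : realFieldType) (I K : finType) (N : network R I K) :=
  [/\ forall i j, link N i j -> 0 <= delay N i j,
      0 < sigma N,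
      forall k, src N k \notin cloud N &
      forall k, dst N k \notin cloud N].

Definition is01 (R : realFieldType) (a : R) := a = 0 \/ a = 1.
Definition in01 (R : realFieldType) (a : R) := 0 <= a <= 1.

(* Extended placement variables following the convention of the paper:
   x_{i,0}(k) = [i = S(k)], x_{i,ell_k+1}(k) = [i = D(k)],
   x_{i,s}(k) = 0 for i not a cloud node, s in F(k).
   x k s v stands for x_{v,s}(k). *)
Definition xext (R : realFieldType) (I K : finType) (N : network R I K)
  (x : K -> nat -> I -> R) (k : K) (s : nat) (i : I) : R :=
  if s == 0%N then (i == src N k)%:R
  else if s == (len N k).+1 then (i == dst N k)%:R
  else if i \in cloud N then x k s i else 0.

Definition thetaN (R : realFieldType) (I K : finType) (N : network R I K)
  (x : K -> nat -> I -> R) (k : K) : R :=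
  \sum_(v in cloud N) \sum_(1 <= s < (len N k).+1) nfv N v k s * x k s v.

Definition thetaL (R : realFieldType) (K : finType)
  (len : K -> nat) (th : K -> nat -> R) (k : K) : R :=
  \sum_(0 <= s < (len k).+1) th k s.

Definition Phi (R : realFieldType) (I K : finType) (N : network R I K)
  (x : K -> nat -> I -> R) (y : I -> R) (th : K -> nat -> R) : R :=
  \sum_(v in cloud N) y v
  + sigma N * \sum_k (thetaL (len N) th k + thetaN N x k).

(* Feasibility for problem (NS) with P paths.
   r k s p = r(k,s,p), rl k s p i j = r_ij(k,s,p), z k s p i j = z_ij(k,s,p),
   th k s = theta(k,s). *)
Definition NS_feasible (R : realFieldType) (I K : finType) (N : network R I K)
  (P : nat) (x : K -> nat -> I -> R) (y : I -> R)
  (r : K -> nat -> 'I_P -> R) (rl z : K -> nat -> 'I_P -> I -> I -> R)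
  (th : K -> nat -> R) : Prop :=
  (forall k s v, (1 <= s <= len N k)%N -> v \in cloud N -> is01 (x k s v)) /\
  (forall v, v \in cloud N -> is01 (y v)) /\
  (forall k s p, (s <= len N k)%N -> 0 <= r k s p) /\
  (forall k s p i j, (s <= len N k)%N -> link N i j ->
      0 <= rl k s p i j /\ is01 (z k s p i j)) /\
  (forall k s, (s <= len N k)%N -> 0 <= th k s) /\
  (forall k s, (1 <= s <= len N k)%N -> \sum_(v in cloud N) x k s v = 1) /\
  (forall k s v, (1 <= s <= len N k)%N -> v \in cloud N -> x k s v <= y v) /\
  (forall v, v \in cloud N ->
      \sum_k \sum_(1 <= s < (len N k).+1) lam N k s * x k s v <= mu N v * y v) /\
  (forall k s, (s <= len N k)%N -> \sum_(p < P) r k s p = 1) /\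
  (forall k s p i j, (s <= len N k)%N -> link N i j ->
      rl k s p i j = r k s p * z k s p i j) /\
  (forall i j, link N i j ->
      \sum_k \sum_(0 <= s < (len N k).+1) \sum_(p < P)
         lam N k s * rl k s p i j <= cap N i j) /\
  (forall k s p i, (s <= len N k)%N ->
      \sum_(j | link N j i) z k s p j i - \sum_(j | link N i j) z k s p i j
      = xext N x k s.+1 i - xext N x k s i) /\
  (forall k s p, (s <= len N k)%N ->
      \sum_(e : I * I | link N e.1 e.2) delay N e.1 e.2 * z k s p e.1 e.2
      <= th k s) /\
  (forall k, thetaN N x k + thetaL (len N) th k <= Theta N k).

Definition NSLP_feasible (R : realFieldType) (I K : finType) (N : network R I K)
  (x : K -> nat -> I -> R) (y : I -> R)
  (z : K -> nat -> I -> I -> R) (th : K -> nat -> R) : Prop :=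
  (forall k s v, (1 <= s <= len N k)%N -> v \in cloud N -> in01 (x k s v)) /\
  (forall v, v \in cloud N -> in01 (y v)) /\
  (forall k s i j, (s <= len N k)%N -> link N i j -> in01 (z k s i j)) /\
  (forall k s, (s <= len N k)%N -> 0 <= th k s) /\
  (forall k s, (1 <= s <= len N k)%N -> \sum_(v in cloud N) x k s v = 1) /\
  (forall k s v, (1 <= s <= len N k)%N -> v \in cloud N -> x k s v <= y v) /\
  (forall v, v \in cloud N ->
      \sum_k \sum_(1 <= s < (len N k).+1) lam N k s * x k s v <= mu N v * y v) /\
  (forall i j, link N i j ->
      \sum_k \sum_(0 <= s < (len N k).+1) lam N k s * z k s i j <= cap N i j) /\
  (forall k s i, (s <= len N k)%N ->
      \sum_(j | link N j i) z k s j i - \sum_(j | link N i j) z k s i j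
      = xext N x k s.+1 i - xext N x k s i) /\
  (forall k s, (s <= len N k)%N ->
      \sum_(e : I * I | link N e.1 e.2) delay N e.1 e.2 * z k s e.1 e.2
      <= th k s) /\
  (forall k, thetaN N x k + thetaL (len N) th k <= Theta N k).

(* Main.v *)
Require Import Defs.
From HB Require Import structures.
From mathcomp Require Import all_boot all_order all_algebra.
Import Order.TTheory GRing.Theory Num.Theory.
Local Open Scope ring_scope.

Lemma swap (R : realFieldType) (I : finType) (P : nat) (Q : pred I) (f : I -> 'I_P -> R) :
  \sum_(j | Q j) \sum_(p < P) f j p = \sum_(p < P) \sum_(j | Q j) f j p.
Proof.
by rewrite (exchange_big_dep xpredT) //=; apply: eq_bigr => p _; apply: eq_bigl => j; rewrite andbT.
Qed.

Theorem theorem2 (R : realFieldType) (I K : finType) (N : network R I K)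
  (P : nat) :
  wf_network N -> (0 < P)%N ->
  forall (x : K -> nat -> I -> R) (y : I -> R)
         (r : K -> nat -> 'I_P -> R) (rl z : K -> nat -> 'I_P -> I -> I -> R)
         (th : K -> nat -> R),
  NS_feasible N x y r rl z th ->
  exists (zl : K -> nat -> I -> I -> R) (thl : K -> nat -> R),
    NSLP_feasible N x y zl thl /\ Phi N x y thl <= Phi N x y th.
Proof.
move=> _ _ x y r rl z th.
move=> [Hx [Hy [Hr [Hz [Hth [Hsx [Hxy [Hmu [Hsr [Hrl [Hcap [Hflow [Hdel He2e]]]]]]]]]]]]].
exists (fun k s i j => \sum_(p < P) r k s p * z k s p i j), th.
split=> //.
have z01 : forall k s p i j, (s <= len N k)%N -> link N i j ->
    0 <= z k s p i j /\ z k s p i j <= 1.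
  move=> k s p i j hs hl; have [_ [->|->]] := Hz k s p i j hs hl; by rewrite ?ler01 ?lexx.
split; first by move=> k s v hs hv; have [->|->] := Hx k s v hs hv; rewrite /in01 ?lexx ?ler01.
split; first by move=> v hv; have [->|->] := Hy v hv; rewrite /in01 ?lexx ?ler01.
split.
  move=> k s i j hs hl; apply/andP; split.
    by apply: sumr_ge0 => p _; apply: mulr_ge0; [exact: Hr | case: (z01 k s p i j hs hl)].
  rewrite -(Hsr k s hs); apply: ler_sum => p _.
  rewrite -[leRHS]mulr1; apply: ler_wpM2l; first exact: Hr.
  by case: (z01 k s p i j hs hl).
do 4 (split=> //).
split.
  move=> i j hl; apply: le_trans (Hcap i j hl); rewrite le_eqVlt; apply/orP; left; apply/eqP.
  apply: eq_bigr => k _; rewrite !big_nat; apply: eq_bigr => s hs.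
  have hs' : (s <= len N k)%N by move: hs; rewrite ltnS.
  rewrite mulr_sumr; apply: eq_bigr => p _.
  by rewrite Hrl.
split.
  move=> k s i hs.
  rewrite !swap.
  rewrite -sumrB.
  under eq_bigr => p _ do rewrite -!mulr_sumr -mulrBr (Hflow k s p i hs).
  by rewrite -mulr_suml Hsr // mul1r.
split=> //.
move=> k s hs.
under eq_bigr => e _ do rewrite mulr_sumr.
rewrite swap.
apply: le_trans (_ : \sum_(p < P) r k s p * th k s <= _).
  apply: ler_sum => p _.
  under eq_bigr => e _ do rewrite mulrCA.
  rewrite -mulr_sumr; apply: ler_wpM2l; first exact: Hr.
  exact: Hdel.
by rewrite -mulr_suml Hsr // mul1r.
Qed.
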